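(* Let $(M_I,\triangleright)$ be a prefactor system and $\alpha,\beta$ consistent sets in it. The following are equivalent: (1) $\alpha^m=\beta^m$; (2) $a_i\approx b_i$ for all $i\in I$, $a_i\in\alpha\cap M_i$, $b_i\in\beta\cap M_i$; (3) $a_i\approx b_j$ for all $i,j\in I$, $a_i\in\alpha\cap M_i$, $b_j\in\beta\cap M_j$.
   Context: Let $(I,\le)$ be a non-empty directed preordered set. Fix a family $\mathcal F(I)$ of subsets of $I$ such that every member is cofinal in $I$, $\mathcal F(I)$ is closed under supersets and finite intersections, and $\mathcal F(I)$ contains every non-empty upward closed subset of $I$. A system $(M_I,\triangleright)$ consists of sets $M_i$ ($i\in I$, pairwise disjoint) and relations $\triangleright\subseteq M_{i'}\times M_i$ for $i\le i'$, reflexive for $i=i'$. $a_i\approx b_j$ iff there are $i'\ge i,j$ and $c\in M_{i'}$ with $c\triangleright a_i$, $c\triangleright b_j$. A prefactor system is a system with $a_{i'}\approx a_i\iff a_{i'}\triangleright a_i$ for all $i\le i'$. A consistent set is a set $\alpha\subseteq\bigcup_i M_i$ with $a_{i'}\triangleright a_i$ for all $a_{i'}\in\alpha\cap M_{i'}$, $a_i\in\alpha\cap M_i$, $i'\ge i$, and with $\{i\mid\alpha\cap M_i\ne\emptyset\}\in\mathcal F(I)$. For a consistent set $\alpha$, $\alpha^m$ denotes the unique inclusion-maximal consistent set containing $\alpha$. *)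

(* Defs.v *)
Section Systems.
Variables (I : Type) (le : I -> I -> Prop).

Definition directed_preorder : Prop :=
  (forall i, le i i) /\ (forall i j k, le i j -> le j k -> le i k) /\
  (exists i : I, True) /\ (forall i j, exists k, le i k /\ le j k).

Definition cofinal (S : I -> Prop) : Prop := forall i, exists j, le i j /\ S j.
Definition upward_closed (S : I -> Prop) : Prop := forall i j, S i -> le i j -> S j.

Definition admissible_family (F : (I -> Prop) -> Prop) : Prop :=
  (forall S, F S -> cofinal S) /\
  (forall S T, F S -> (forall i, S i -> T i) -> F T) /\
  F (fun _ => True) /\
  (forall S T, F S -> F T -> F (fun i => S i /\ T i)) /\
  (forall S, (exists i, S i) -> upward_closed S -> F S).

(* A system: sets M i (disjoint by construction, as a dependent family) and
   relations tr i i' : M i' -> M i -> Prop, [tr i i' c a] meaning c |> a,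
   considered for i <= i'. *)
Variables (M : I -> Type) (tr : forall i i' : I, M i' -> M i -> Prop).

Definition system_refl : Prop := forall i (a : M i), tr i i a a.

Definition approx {i} (a : M i) {j} (b : M j) : Prop :=
  exists i' (c : M i'), le i i' /\ le j i' /\ tr i i' c a /\ tr j i' c b.

Definition prefactor : Prop :=
  forall i i' (a' : M i') (a : M i), le i i' -> (approx a' a <-> tr i i' a' a).

Definition subset_family (A B : forall i, M i -> Prop) : Prop :=
  forall i (a : M i), A i a -> B i a.

Definition consistent (F : (I -> Prop) -> Prop) (A : forall i, M i -> Prop) : Prop :=
  (forall i i' (a : M i) (a' : M i'), A i a -> A i' a' -> le i i' -> tr i i' a' a) /\
  F (fun i => exists a : M i, A i a).

(* G is an inclusion-maximal consistent set containing A (i.e. G = A^m) *)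
Definition is_max_ext (F : (I -> Prop) -> Prop) (A G : forall i, M i -> Prop) : Prop :=
  consistent F G /\ subset_family A G /\
  (forall D, consistent F D -> subset_family G D -> subset_family D G).

End Systems.

(* Main.v *)
Require Import Defs.

Section Aux.
Variables (I : Type) (le : I -> I -> Prop) (F : (I -> Prop) -> Prop) (M : I -> Type)
  (tr : forall i i' : I, M i' -> M i -> Prop).
Hypothesis HI : directed_preorder I le.
Hypothesis HF : admissible_family I le F.
Hypothesis Hrefl : system_refl I M tr.
Hypothesis Hpre : prefactor I le M tr.

Lemma find_above (S : I -> Prop) i j : F S -> exists k, le i k /\ le j k /\ S k.
Proof.
  intros HS. destruct HI as [_ [Htr [_ Hdir]]].
  destruct HF as [Hcof _].
  destruct (Hdir i j) as [k0 [H1 H2]].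
  destruct (Hcof S HS k0) as [k [H3 H4]].
  exists k. split; [eapply Htr; eauto|split; [eapply Htr; eauto|exact H4]].
Qed.

Lemma approx_sym i (a : M i) j (b : M j) : approx I le M tr a b -> approx I le M tr b a.
Proof. intros [l [c [H1 [H2 [H3 H4]]]]]. exists l, c. tauto. Qed.

Lemma tr_approx i i' (a' : M i') (a : M i) : le i i' -> tr i i' a' a -> approx I le M tr a' a.
Proof.
  intros Hle Ht. exists i', a'. destruct HI as [Hr _].
  split; [apply Hr|split; [exact Hle|split; [apply Hrefl|exact Ht]]].
Qed.

End Aux.

Theorem lemma2p10 (I : Type) (le : I -> I -> Prop)
  (F : (I -> Prop) -> Prop) (M : I -> Type)
  (tr : forall i i' : I, M i' -> M i -> Prop)
  (HI : directed_preorder I le) (HF : admissible_family I le F)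
  (Hrefl : system_refl I M tr) (Hpre : prefactor I le M tr)
  (alpha beta : forall i, M i -> Prop)
  (Ha : consistent I le M tr F alpha) (Hb : consistent I le M tr F beta) :
  ((exists G, is_max_ext I le M tr F alpha G /\ is_max_ext I le M tr F beta G) <->
   (forall i (a b : M i), alpha i a -> beta i b -> approx I le M tr a b)) /\
  ((forall i (a b : M i), alpha i a -> beta i b -> approx I le M tr a b) <->
   (forall i j (a : M i) (b : M j), alpha i a -> beta j b -> approx I le M tr a b)).
Proof.
  pose proof HI as HI'. destruct HI' as [Hler [Hlet [_ Hdir]]].
  pose proof HF as HF'. destruct HF' as [Hcof [Hsup [_ [Hint _]]]].
  assert (H23 : forall A B : forall i, M i -> Prop,
    consistent I le M tr F A -> consistent I le M tr F B ->
    (forall i (a b : M i), A i a -> B i b -> approx I le M tr a b) ->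
    (forall i j (a : M i) (b : M j), A i a -> B j b -> approx I le M tr a b)).
  { intros A B [HA1 HA2] [HB1 HB2] H2 i j a b Ha0 Hb0.
    destruct (find_above I le F HI HF _ i j (Hint _ _ HA2 HB2)) as [k [Hik [Hjk [[a' Ha'] [b' Hb']]]]].
    pose proof (HA1 _ _ _ _ Ha0 Ha' Hik) as Ta.
    pose proof (HB1 _ _ _ _ Hb0 Hb' Hjk) as Tb.
    assert (Tab : tr k k a' b') by (apply (Hpre k k a' b' (Hler k)); apply H2; auto).
    assert (Tba : tr k k b' a').
    { apply (Hpre k k b' a' (Hler k)). apply approx_sym. apply tr_approx; auto. }
    assert (Ta'b : tr j k a' b).
    { apply (Hpre j k a' b Hjk). exists k, b'. repeat split; auto. }
    exists k, a'. repeat split; auto. }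
  assert (H32 : (forall i j (a : M i) (b : M j), alpha i a -> beta j b -> approx I le M tr a b) ->
     (forall i (a b : M i), alpha i a -> beta i b -> approx I le M tr a b)).
  { intros H i a b; apply H. }
  split; [|split; [apply H23; auto|apply H32]].
  split.
  - intros [G [[[HG1 _] [HaG _]] [_ [HbG _]]]] i a b Ha0 Hb0.
    apply tr_approx; auto; apply HG1; auto.
  - intros H2.
    pose proof (H23 _ _ Ha Hb H2) as H3.
    assert (Haa : forall i j (a : M i) (b : M j), alpha i a -> alpha j b -> approx I le M tr a b).
    { apply H23; auto. intros i a b Ha0 Hb0. apply tr_approx; auto. apply (proj1 Ha); auto. }
    set (G := fun l (c : M l) => forall i (a : M i), alpha i a -> approx I le M tr c a).
    assert (GC : consistent I le M tr F G).
    { split.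
      - intros l l' c d Hc Hd Hll.
        destruct (find_above I le F HI HF _ l' l' (proj2 Ha)) as [k [Hlk' [_ [a Hak]]]].
        pose proof (Hlet _ _ _ Hll Hlk') as Hlk.
        assert (T1 : tr l k a c) by (apply (Hpre l k a c Hlk); apply approx_sym; auto).
        assert (T2 : tr l' k a d) by (apply (Hpre l' k a d Hlk'); apply approx_sym; auto).
        apply (Hpre l l' d c Hll). exists k, a. repeat split; auto.
      - apply (Hsup _ _ (proj2 Ha)). intros i [a Ha0]. exists a. intros j b Hb0. apply Haa; auto. }
    assert (GM : forall D, consistent I le M tr F D -> subset_family I M G D -> subset_family I M D G).
    { intros D [HD1 HD2] HGD l d Hd i a Ha0.
      assert (HaD : D i a) by (apply HGD; intros j b Hb0; apply Haa; auto).
      destruct (find_above I le F HI HF _ l i HD2) as [k [Hlk [Hik [e He]]]].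
      exists k, e. repeat split; auto. }
    exists G. split; split; auto; split; auto.
    + intros i a Ha0 j b Hb0. apply Haa; auto.
    + intros i b Hb0 j a Ha0. apply approx_sym. apply H3; auto.
Qed.
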